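(* For every prime $p\geq 2$, $SD(\mathbb{Q}_p)=\{\mathrm{id}\}$.
   Context: $\mathbb{Q}_p$ denotes the field of $p$-adic numbers. For fields $\mathbb{F},\widetilde{\mathbb{F}}$, a map $f:\mathbb{F}\to\widetilde{\mathbb{F}}$ is called an SD-map if for all $x\neq y$ in $\mathbb{F}$ one has $f(x)\neq f(y)$ and \[ f\left(\frac{x+y}{x-y}\right)=\frac{f(x)+f(y)}{f(x)-f(y)}. \] For a field $\mathbb{F}$, $SD(\mathbb{F})$ denotes the set of surjective SD-maps $f:\mathbb{F}\to\mathbb{F}$ (no continuity is assumed). *)

(* Defs.v *)
From HB Require Import structures.
From mathcomp Require Import all_boot all_algebra.
From mathcomp Require Import boolp.
From mathcomp Require Import zify.
Set Implicit Arguments.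
Unset Strict Implicit.
Unset Printing Implicit Defensive.
Import GRing.Theory Num.Theory.
Local Open Scope ring_scope.

Section PadicIntegers.
Variable p : nat.

(* The base prime: equals p whenever p is prime (pdiv_id); the detour through
   pdiv only serves to make the construction total in p. *)
Definition padic_base : nat := pdiv (p.-2).+2.
Local Notation b := padic_base.

Lemma padic_base_prime : prime b.
Proof. exact: pdiv_prime. Qed.

Lemma padic_base_gt1 : (1 < b)%N.
Proof. exact: prime_gt1 padic_base_prime. Qed.

Definition zpmod (n : nat) (a : int) : int := (a %% (b ^ n)%:Z)%Z.

Definition padic_coherent (x : nat -> int) := forall n, x n = zpmod n (x n.+1).

Record padic_int := PadicInt { pval : nat -> int; pvalP : padic_coherent pval }.

Lemma padic_eq (x y : padic_int) : pval x =1 pval y -> x = y.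
Proof.
case: x y => [x hx] [y hy] /= /funext e; subst y.
by rewrite (Prop_irrelevance hx hy).
Qed.

HB.instance Definition _ := gen_eqMixin padic_int.
HB.instance Definition _ := gen_choiceMixin padic_int.

Lemma zpmod_mod n a : zpmod n (zpmod n a) = zpmod n a.
Proof. by rewrite /zpmod modz_mod. Qed.

Lemma zpmodS_k n k a : zpmod n (zpmod (n + k) a) = zpmod n a.
Proof.
rewrite /zpmod; apply/eqP; rewrite eqz_mod_dvd.
have -> : (a %% (b ^ (n + k))%:Z)%Z - a = - ((a %/ (b ^ (n + k))%:Z)%Z * (b ^ (n + k))%:Z).
  by rewrite {2}(divz_eq a (b ^ (n + k))%:Z) opprD addrCA subrr addr0.
rewrite -mulNr; apply: dvdz_mull.
by rewrite /dvdz !absz_nat expnD; apply: dvdn_mulr.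
Qed.

Lemma zpmodS n a : zpmod n (zpmod n.+1 a) = zpmod n a.
Proof. by rewrite -addn1 zpmodS_k. Qed.

Lemma pval_red (x : padic_int) n : zpmod n (pval x n) = pval x n.
Proof. by rewrite [in RHS](pvalP x) [in LHS](pvalP x) zpmod_mod. Qed.

Lemma zpmod0 n : zpmod n 0 = 0.
Proof. by rewrite /zpmod mod0z. Qed.

Lemma coh2 (f : int -> int -> int) :
  (forall n a c, zpmod n (f (zpmod n a) (zpmod n c)) = zpmod n (f a c)) ->
  forall x y : padic_int, padic_coherent (fun n => zpmod n (f (pval x n) (pval y n))).
Proof.
move=> hf x y n /=.
by rewrite zpmodS (pvalP x n) (pvalP y n) hf.
Qed.

Lemma coh1 (f : int -> int) :
  (forall n a, zpmod n (f (zpmod n a)) = zpmod n (f a)) ->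
  forall x : padic_int, padic_coherent (fun n => zpmod n (f (pval x n))).
Proof. by move=> hf x n /=; rewrite zpmodS (pvalP x n) hf. Qed.

Lemma coh0 (c : int) : padic_coherent (fun n => zpmod n c).
Proof. by move=> n; rewrite zpmodS. Qed.

Definition pzero := PadicInt (coh0 0).
Definition pone := PadicInt (coh0 1).
Definition popp x := PadicInt (@coh1 (fun a => - a)
  (fun n a => modzNm a (b ^ n)%:Z) x).
Definition padd x y := PadicInt (@coh2 (fun a c => a + c)
  (fun n a c => modzDm a c (b ^ n)%:Z) x y).
Definition pmul x y := PadicInt (@coh2 (fun a c => a * c)
  (fun n a c => modzMm a c (b ^ n)%:Z) x y).

Lemma paddA : associative padd.
Proof.
move=> x y z; apply: padic_eq => n /=; rewrite /zpmod.
by rewrite modzDml modzDmr addrA.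
Qed.

Lemma paddC : commutative padd.
Proof. by move=> x y; apply: padic_eq => n /=; rewrite addrC. Qed.

Lemma padd0 : left_id pzero padd.
Proof.
move=> x; apply: padic_eq => n /=.
by rewrite zpmod0 add0r pval_red.
Qed.

Lemma paddN : left_inverse pzero popp padd.
Proof.
move=> x; apply: padic_eq => n /=; rewrite /zpmod.
by rewrite modzDml addNr.
Qed.

HB.instance Definition _ := GRing.isZmodule.Build padic_int paddA paddC padd0 paddN.

Lemma pmulA : associative pmul.
Proof.
move=> x y z; apply: padic_eq => n /=; rewrite /zpmod.
by rewrite modzMml modzMmr mulrA.
Qed.

Lemma pmulC : commutative pmul.
Proof. by move=> x y; apply: padic_eq => n /=; rewrite mulrC. Qed.

Lemma pmul1 : left_id pone pmul.
Proof.
move=> x; apply: padic_eq => n /=.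
by rewrite /zpmod modzMml mul1r -/(zpmod n _) pval_red.
Qed.

Lemma pmulDl : left_distributive pmul padd.
Proof.
move=> x y z; apply: padic_eq => n /=; rewrite /zpmod.
by rewrite modzMml modzDm mulrDl.
Qed.

Lemma pone_neq0 : pone != pzero.
Proof.
apply/eqP => /(congr1 (fun x => pval x 1)) /=.
rewrite /zpmod expn1 mod0z modz_small //.
by rewrite ler01 /= ltz_nat padic_base_gt1.
Qed.

HB.instance Definition _ :=
  GRing.Zmodule_isComNzRing.Build padic_int pmulA pmulC pmul1 pmulDl pone_neq0.

Definition punit : {pred padic_int} := fun x => `[< exists y, y * x == 1 >].
Definition pinv (x : padic_int) : padic_int :=
  match pselect (exists y, y * x == 1) with
  | left h => xchoose h
  | right _ => x
  end.

Lemma pmulVx : {in punit, left_inverse 1 pinv *%R}.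
Proof.
move=> x hx; rewrite /pinv.
case: pselect => [h'|//]; first exact/eqP/(xchooseP h').
by move=> nh; exfalso; apply: nh; apply/asboolP.
Qed.

Lemma punitPl x y : y * x = 1 -> punit x.
Proof. by move=> e; apply/asboolP; exists y; rewrite e. Qed.

Lemma pinv_out : {in [predC punit], pinv =1 id}.
Proof.
move=> x hx; rewrite /pinv; case: pselect => // h.
by exfalso; move: hx; rewrite inE /= => /negP; apply; apply/asboolP.
Qed.

HB.instance Definition _ :=
  GRing.ComNzRing_hasMulInverse.Build padic_int pmulVx punitPl pinv_out.

Lemma pval_mul (x y : padic_int) n : pval (x * y) n = zpmod n (pval x n * pval y n).
Proof. by []. Qed.

Lemma pval_zero n : pval (0 : padic_int) n = 0.
Proof. by rewrite /= /zpmod mod0z. Qed.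

Lemma pval_down (x : padic_int) a k : pval x a = zpmod a (pval x (a + k)).
Proof.
elim: k => [|k IH]; first by rewrite addn0 pval_red.
by rewrite IH (pvalP x (a + k)) addnS -addn1 -addnA zpmodS_k.
Qed.

Lemma pneq0 (x : padic_int) : x != 0 -> exists a, pval x a != 0.
Proof.
move=> /eqP nx; apply: contrapT => h; apply: nx; apply: padic_eq => n.
rewrite pval_zero; apply/eqP; apply: contrapT => hn; apply: h; exists n; exact/negP.
Qed.

Lemma padic_idomain : GRing.integral_domain_axiom padic_int.
Proof.
move=> x y xy0; case: (boolP ((x == 0) || (y == 0))) => //; rewrite negb_or => /andP[/pneq0[a ha] /pneq0[c hc]].
have ndiv (z : padic_int) d k : pval z d != 0 ->
    ~~ (b ^ d %| `|pval z (d + k)|)%N.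
  move=> hz; apply: contra hz => dv.
  rewrite (pval_down z d k) /zpmod; apply/eqP/dvdz_mod0P.
  by rewrite /dvdz absz_nat.
have hx := ndiv x a c ha; have hy := ndiv y c a hc.
have := congr1 (fun z => pval z (a + c)) xy0.
rewrite /= zpmod0 /zpmod => /dvdz_mod0P; rewrite /dvdz absz_nat unfold_in abszM => dv.
rewrite addnC in hy.
set X := `|pval x (a + c)|%N in hx dv; set Y := `|pval y (a + c)|%N in hy dv.
have Xp : (0 < X)%N by rewrite lt0n; apply: contra hx => /eqP ->; rewrite dvdn0.
have Yp : (0 < Y)%N by rewrite lt0n; apply: contra hy => /eqP ->; rewrite dvdn0.
have pb := padic_base_prime.
move: hx hy dv; rewrite !pfactor_dvdn ?muln_gt0 ?Xp ?Yp // lognM // -!ltnNge.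
move=> h1 h2 h3; lia.
Qed.

HB.instance Definition _ := GRing.ComUnitRing_isIntegral.Build padic_int padic_idomain.

End PadicIntegers.

Definition Qp (p : nat) : fieldType := {fraction (padic_int p)}.

Definition SD_map (F G : fieldType) (f : F -> G) : Prop :=
  forall x y : F, x != y ->
    f x != f y /\ f ((x + y) / (x - y)) = (f x + f y) / (f x - f y).

Definition SD (F : fieldType) (f : F -> F) : Prop :=
  SD_map f /\ (forall z : F, exists x : F, f x = z).

(* Main.v *)
Require Import Defs.
From mathcomp Require Import all_boot all_algebra.
From HB Require Import structures.
From mathcomp Require Import all_boot all_algebra.
From mathcomp Require Import ring zify.
From mathcomp Require Import boolp generic_quotient fraction.
Import GRing.Theory Num.Theory.
Local Open Scope ring_scope.
Set Implicit Arguments.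
Unset Strict Implicit.

Lemma lc1 (R : comRingType) (c1 L M a1 b1 : R) : a1 = b1 -> L - M = c1 * (a1 - b1) -> L = M.
Proof. by move=> -> /eqP; rewrite !subrr !mulr0 subr_eq0 => /eqP. Qed.
Arguments lc1 {R} c1 {L M a1 b1}.
Lemma lc2 (R : comRingType) (c1 c2 L M a1 b1 a2 b2 : R) : a1 = b1 -> a2 = b2 -> L - M = c1 * (a1 - b1) + c2 * (a2 - b2) -> L = M.
Proof. by move=> -> -> /eqP; rewrite !subrr !mulr0 addr0 subr_eq0 => /eqP. Qed.
Arguments lc2 {R} c1 c2 {L M a1 b1 a2 b2}.

Lemma binom1 (r s : int) q : exists K, (r + s) ^+ q.+1 = r ^+ q.+1 + q.+1%:R * r ^+ q * s + s ^+ 2 * K.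
Proof.
elim: q => [|q [K IH]]; first by exists 0; rewrite !expr1 expr0; ring.
exists (q.+1%:R * r ^+ q + (r + s) * K).
rewrite exprS IH (exprS r q.+1) (exprS r q).
rewrite -natr1; ring.
Qed.

Lemma dvdXX (d a b : int) q : (d %| a - b)%Z -> (d %| a ^+ q - b ^+ q)%Z.
Proof.
case: q => [|q] h; first by rewrite !expr0 subrr dvdz0.
by rewrite subrXX dvdz_mulr.
Qed.

Lemma fld_aux (F : fieldType) (An Pn C1 C2 G : F) : C2 != 0 ->
  (An + Pn * (C1 / C2)) * G * C2 = G * (An * C2 + Pn * C1).
Proof. by move=> h; field. Qed.

Section FD.
Local Open Scope quotient_scope.
Lemma frac_decomp (R : idomainType) (z : {fraction R}) :
  exists a b : R, b != 0 /\ z = tofrac a / tofrac b.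
Proof.
elim/quotW: z => x.
exists (frac x).1, (frac x).2; split; first exact: denom_ratioP.
apply: (@mulIf _ (tofrac (frac x).2)); first by rewrite tofrac_eq0 denom_ratioP.
rewrite mulfVK ?tofrac_eq0 ?denom_ratioP //.
unlock tofrac. rewrite -[_ * _]/(FracField.mul _ _) !piE.
apply/eqmodP; rewrite /= FracField.equivfE /= /FracField.mulf !numden_Ratio ?mulf_neq0 ?oner_eq0 ?denom_ratioP //.
by rewrite !mulr1 mulrC.
Qed.
End FD.

Section P.
Variable p : nat.
Hypothesis hp : prime p.
Local Notation R := (padic_int p).

Lemma p_gt1 : (1 < p)%N.
Proof. exact: prime_gt1. Qed.

Lemma eb : padic_base p = p.
Proof.
rewrite /padic_base; have := p_gt1; case: p hp => [|[|n]] //= hp' _.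
by rewrite pdiv_id.
Qed.

Lemma zpE n a : zpmod p n a = (a %% (p ^ n)%:Z)%Z.
Proof. by rewrite /zpmod eb. Qed.

Lemma zp0P n a : zpmod p n a = 0 <-> ((p ^ n)%:Z %| a)%Z.
Proof. by rewrite zpE; split => [/dvdz_mod0P|/dvdz_mod0P]. Qed.

Lemma pval_add (x y : R) n : pval (x + y) n = zpmod p n (pval x n + pval y n).
Proof. by []. Qed.
Lemma pval_opp (x : R) n : pval (- x) n = zpmod p n (- pval x n).
Proof. by []. Qed.
Lemma pval1 n : pval (1 : R) n = zpmod p n 1.
Proof. by []. Qed.

Lemma pval_sub (x y : R) n : pval (x - y) n = zpmod p n (pval x n - pval y n).
Proof. by rewrite pval_add pval_opp !zpE modzDmr. Qed.

Lemma pval_nat m n : pval (m%:R : R) n = zpmod p n m%:Z.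
Proof.
elim: m => [|m IH]; first by rewrite pval_zero zpE mod0z.
by rewrite -natr1 pval_add IH pval1 !zpE modzDm -addn1 PoszD.
Qed.

Lemma pval_int (k : int) n : pval (k%:~R : R) n = zpmod p n k.
Proof.
case: k => m; first by rewrite pval_nat.
by rewrite NegzE mulrNz pval_opp pval_nat !zpE modzNm.
Qed.

Lemma pval_exp (x : R) k n : pval (x ^+ k) n = zpmod p n (pval x n ^+ k).
Proof.
elim: k => [|k IH]; first by rewrite !expr0 pval1.
by rewrite exprS pval_mul IH !zpE modzMmr exprS.
Qed.

Lemma pval0 (x : R) : pval x 0 = 0.
Proof. by rewrite -pval_red zpE expn0 modz1. Qed.

Lemma dv_down (x : R) i j : (i <= j)%N -> pval x j = 0 -> pval x i = 0.
Proof.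
move=> ij e; rewrite (pval_down x i (j - i)) subnKC // e.
by rewrite zpE mod0z.
Qed.

Lemma dvdE (x : R) n m : (n <= m)%N -> (pval x n = 0 <-> ((p ^ n)%:Z %| pval x m)%Z).
Proof.
by move=> nm; rewrite (pval_down x n (m - n)) subnKC // zp0P.
Qed.

Lemma dvdpp k N : (k <= N)%N -> ((p ^ k)%:Z %| (p ^ N)%:Z)%Z.
Proof. by move=> kN; rewrite dvdzE !absz_nat dvdn_exp2l. Qed.

Lemma lvl (x : R) k N a : (k <= N)%N -> pval x N = zpmod p N a ->
  (pval x k = 0 <-> ((p ^ k)%:Z %| a)%Z).
Proof.
move=> kN e; rewrite (dvdE x kN) e zpE.
have h : ((p ^ k)%:Z %| (a %/ (p ^ N)%:Z)%Z * (p ^ N)%:Z)%Z by apply: dvdz_mull; exact: dvdpp.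
by rewrite {2}(divz_eq a (p ^ N)%:Z) (rpredDl _ h).
Qed.

Lemma vlog k (a : int) : a != 0 -> ((p ^ k)%:Z %| a)%Z = (k <= logn p `|a|)%N.
Proof. by move=> a0; rewrite dvdzE absz_nat pfactor_dvdn // absz_gt0. Qed.

Definition ev i (x : R) := pval x i = 0 /\ pval x i.+1 != 0.

Lemma ev_int (x : R) i N a : (i < N)%N -> pval x N = zpmod p N a ->
  (ev i x <-> a != 0 /\ logn p `|a| = i).
Proof.
move=> iN e; rewrite /ev.
have L1 := lvl (k:=i) (ltnW iN) e; have L2 := lvl (k:=i.+1) iN e.
have [az|a0] := eqVneq a 0.
  split; last by rewrite az; case.
  by case=> _ /eqP h2; exfalso; apply: h2; apply/L2; rewrite az; exact: dvdz0.
rewrite !vlog // in L1 L2.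
split.
  case=> /L1 h1 /eqP h2; split => //.
  apply/eqP; rewrite eqn_leq h1 andbT leqNgt; apply/negP => h; apply: h2; exact/L2.
case=> _ hl; split; first by apply/L1; rewrite hl.
by apply/eqP => /L2; rewrite hl ltnn.
Qed.

Lemma ev_self (x : R) i : ev i x -> pval x i.+1 != 0 /\ logn p `|pval x i.+1| = i.
Proof. by move=> h; apply/(ev_int (ltnSn i) (esym (pval_red x _))). Qed.

Lemma evM i j (x y : R) : ev i x -> ev j y -> ev (i + j) (x * y).
Proof.
move=> hx hy.
have iN : (i < (i + j).+1)%N by lia.
have jN : (j < (i + j).+1)%N by lia.
have /(ev_int iN (esym (pval_red x _))) [a0 la] := hx.
have /(ev_int jN (esym (pval_red y _))) [b0 lb] := hy.
apply/(ev_int (ltnSn _) (pval_mul _ _ _)); split; first by rewrite mulf_neq0.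
by rewrite abszM lognM ?absz_gt0 // la lb.
Qed.

Lemma ev_uniq i j (x : R) : ev i x -> ev j x -> i = j.
Proof.
move=> [hi hi'] [hj hj']; apply/eqP; rewrite eqn_leq; apply/andP; split.
  by rewrite leqNgt; apply/negP => h; move/negP: hj'; apply; rewrite (dv_down h hi).
by rewrite leqNgt; apply/negP => h; move/negP: hi'; apply; rewrite (dv_down h hj).
Qed.

Lemma ev_ne0 i (x : R) : ev i x -> x != 0.
Proof. by case=> _; apply: contra => /eqP ->; rewrite pval_zero. Qed.

Lemma ev_ex (x : R) : x != 0 -> exists i, ev i x.
Proof.
move=> /(pneq0) => hx.
have ex : exists n, pval x n != 0 by case: hx => a ha; exists a.
case: (ex_minnP ex) => m hm hmin.
case: m hm hmin => [|m] hm hmin; first by rewrite pval0 eqxx in hm.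
exists m; split => //; apply/eqP; apply: contraT => h.
by have := hmin _ h; rewrite ltnn.
Qed.

Lemma ev_add i (x y : R) : ev i x -> pval y i.+1 = 0 -> ev i (x + y).
Proof.
move=> [h1 h2] hy; split.
  by rewrite pval_add h1 (dv_down (leqnSn i) hy) addr0 zpE mod0z.
by rewrite pval_add hy addr0 pval_red.
Qed.

Lemma ev0_one : ev 0 (1 : R).
Proof.
split; first by rewrite pval0.
rewrite pval1 zpE expn1 modz_small //; apply/andP; split => //.
by rewrite ltz_nat p_gt1.
Qed.

Lemma evX i k (x : R) : ev i x -> ev (i * k) (x ^+ k).
Proof.
move=> h; elim: k => [|k IH]; first by rewrite muln0 expr0; exact: ev0_one.
by rewrite exprS mulnS; apply: evM.
Qed.

Lemma evP : ev 1 (p%:R : R).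
Proof.
split; first by rewrite pval_nat zpE expn1 modzz.
rewrite pval_nat zpE modz_small; first by rewrite eqz_nat; have := p_gt1; case: (p).
apply/andP; split => //; rewrite ltz_nat.
by rewrite -{1}(expn1 p) ltn_exp2l // p_gt1.
Qed.

Lemma dv_add n (x y : R) : pval x n = 0 -> pval y n = 0 -> pval (x + y) n = 0.
Proof. by move=> hx hy; rewrite pval_add hx hy addr0 zpE mod0z. Qed.

Lemma dv_opp n (x : R) : pval x n = 0 -> pval (- x) n = 0.
Proof. by move=> hx; rewrite pval_opp hx oppr0 zpE mod0z. Qed.

Lemma dv_sub n (x y : R) : pval x n = 0 -> pval y n = 0 -> pval (x - y) n = 0.
Proof. by move=> hx hy; apply: dv_add => //; apply: dv_opp. Qed.

Lemma dv_mull n (x y : R) : pval y n = 0 -> pval (x * y) n = 0.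
Proof. by move=> hy; rewrite pval_mul hy mulr0 zpE mod0z. Qed.

Lemma dv_mulr n (x y : R) : pval x n = 0 -> pval (x * y) n = 0.
Proof. by move=> hx; rewrite pval_mul hx mul0r zpE mod0z. Qed.

Lemma ndvd_unit (y : R) m : (0 < m)%N -> pval y 1 != 0 -> ~~ (p %| `|pval y m|)%N.
Proof.
move=> m0 hy; apply: contra hy => h.
rewrite (pval_down y 1 (m - 1)) subnKC //; apply/eqP/zp0P.
by rewrite expn1 dvdzE absz_nat.
Qed.

Lemma dv_cancel n (x y : R) : pval (x * y) n = 0 -> pval y 1 != 0 -> pval x n = 0.
Proof.
case: n => [|n]; first by move=> *; rewrite pval0.
move=> hxy hy.
have := (lvl (k:=n.+1) (leqnn _) (pval_mul x y _)).1 hxy.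
rewrite Gauss_dvdzl; first by move=> h; apply/(dvdE x (leqnn _)).
rewrite coprimezE absz_nat coprime_pexpl // prime_coprime //.
exact: ndvd_unit.
Qed.

Lemma dv_all (x : R) : (forall n, pval x n = 0) -> x = 0.
Proof. by move=> h; apply: padic_eq => n; rewrite h pval_zero. Qed.

Lemma pval_Pk k n : pval ((p%:R : R) ^+ k) n = zpmod p n (p ^ k)%:Z.
Proof. by rewrite -natrX pval_nat. Qed.

Lemma pk_neq0 k : ((p ^ k)%:Z : int) != 0.
Proof. by rewrite eqz_nat expn_eq0 negb_and; have := p_gt1; case: (p). Qed.

Lemma pdivide k (x : R) : pval x k = 0 -> exists y, x = (p%:R : R) ^+ k * y.
Proof.
move=> hx.
have dk m : (k <= m)%N -> ((p ^ k)%:Z %| pval x m)%Z by move=> km; apply/(dvdE x km).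
pose d := ((p ^ k)%:Z : int).
pose s n := zpmod p n ((pval x (n + k)) %/ d)%Z.
have coh : padic_coherent p s.
  move=> n; rewrite /s zpmodS; rewrite !zpE; apply/eqP; rewrite eqz_mod_dvd.
  set X := pval x (n.+1 + k); set Y := pval x (n + k).
  have hX : ((X %/ d)%Z * d = X) by apply: divzK; apply: dk; lia.
  have hY : ((Y %/ d)%Z * d = Y) by apply: divzK; apply: dk; lia.
  have hXY : ((p ^ (n + k))%:Z %| Y - X)%Z.
    rewrite /Y /X addSn (pvalP x (n + k)) -/X zpE.
    have e : forall a b : int, b - (a + b) = - a by move=> a b; ring.
    by rewrite {2}(divz_eq X (p ^ (n + k))%:Z) e rpredN dvdz_mull // dvdzz.
  rewrite -(@dvdz_mul2r ((p ^ k)%:Z) _ _ (pk_neq0 k)) mulrBl hX hY -/d.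
  by rewrite /d -PoszM -expnD.
exists (PadicInt coh); apply: padic_eq => n.
rewrite pval_mul pval_Pk /= /s !zpE modzMml modzMmr mulrC.
rewrite divzK; last by apply: dk; lia.
by rewrite -zpE -pval_down.
Qed.

Lemma int_approx (x : R) n : exists c, x = (pval x n)%:~R + (p%:R : R) ^+ n * c.
Proof.
have h : pval (x - (pval x n)%:~R) n = 0.
  by rewrite pval_sub pval_int pval_red subrr zpE mod0z.
case: (pdivide h) => c hc; exists c.
by rewrite -hc addrC subrK.
Qed.

Lemma zp_eq n a b : ((p ^ n)%:Z %| a - b)%Z -> zpmod p n a = zpmod p n b.
Proof. by move=> h; rewrite !zpE; apply/eqP; rewrite eqz_mod_dvd. Qed.

Lemma zp_dvd n a : ((p ^ n)%:Z %| zpmod p n a - a)%Z.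
Proof.
rewrite zpE {2}(divz_eq a (p ^ n)%:Z).
have e : forall u v : int, v - (u + v) = - u by move=> u v; ring.
by rewrite e rpredN dvdz_mull // dvdzz.
Qed.

Lemma zp_sub n a b : zpmod p n (a - zpmod p n b) = zpmod p n (a - b).
Proof. by rewrite !zpE -modzDmr modzNm modzDmr. Qed.

Section Build.
Variable G : nat -> int -> Prop.
Variable r1 : int.
Hypothesis H1 : G 1 r1.
Hypothesis Hl : forall n r, G n.+1 r -> exists r', G n.+2 r' /\ zpmod p n.+1 r' = r.

Fixpoint bseq (n : nat) : {r | G n.+1 r} :=
  match n with
  | 0 => exist _ r1 H1
  | m.+1 => let s := bseq m in
            exist _ (proj1_sig (cid (Hl (proj2_sig s))))
                    (proj1 (proj2_sig (cid (Hl (proj2_sig s)))))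
  end.

Definition bval (n : nat) : int := if n is m.+1 then proj1_sig (bseq m) else 0.

Lemma bval_coh : padic_coherent p bval.
Proof.
case=> [|m] /=; first by rewrite zpE expn0 modz1.
by rewrite (proj2 (proj2_sig (cid (Hl (proj2_sig (bseq m)))))).
Qed.

Lemma build : exists x : R, forall n, G n.+1 (pval x n.+1).
Proof. by exists (PadicInt bval_coh) => n /=; exact: proj2_sig (bseq n). Qed.
End Build.

Lemma hensel q (hq : ~~ (p %| q.+1)%N) (B c : R) :
  pval c 1 != 0 -> pval (B - c ^+ q.+1) 1 = 0 -> exists r : R, r ^+ q.+1 = B.
Proof.
move=> hc hB.
pose G n (r : int) := zpmod p n r = r /\ ((p ^ n)%:Z %| r ^+ q.+1 - pval B n)%Z /\ zpmod p 1 r = pval c 1.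
have H1 : G 1 (pval c 1).
  split; first exact: pval_red.
  split; last exact: pval_red.
  rewrite pval_sub pval_exp zp_sub in hB.
  by move/zp0P: hB; rewrite -rpredN opprB.
have Hl : forall n r, G n.+1 r -> exists r', G n.+2 r' /\ zpmod p n.+1 r' = r.
  move=> n r [h1 [h2 h3]].
  set m := n.+1.
  have pr : ~~ (p %| `|r|)%N.
    apply: contra hc => h; rewrite -h3; apply/eqP/zp0P.
    by rewrite expn1 dvdzE absz_nat.
  set g : int := q.+1%:R * r ^+ q.
  have cop : coprimez p%:Z g.
    rewrite coprimezE absz_nat /g abszM abszX natz absz_nat prime_coprime //.
    by rewrite Euclid_dvdM // Euclid_dvdX // negb_or hq /= negb_and pr.
  case/coprimezP: cop => [[u v]] /= huv.
  have hv : (p%:Z %| v * g - 1)%Z.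
    have -> : v * g - 1 = - (u * p%:Z) by apply: (lc1 1 huv); ring.
    by rewrite rpredN dvdz_mull // dvdzz.
  have hk : ((p ^ m)%:Z %| r ^+ q.+1 - pval B m.+1)%Z.
    have e : r ^+ q.+1 - pval B m.+1 = (r ^+ q.+1 - pval B m) + (pval B m - pval B m.+1) by ring.
    rewrite e (rpredD h2) // {1}(pvalP B m); exact: zp_dvd.
  set k := ((r ^+ q.+1 - pval B m.+1) %/ (p ^ m)%:Z)%Z.
  have ek : k * (p ^ m)%:Z = r ^+ q.+1 - pval B m.+1 := divzK hk.
  set s := (- k * v) * (p ^ m)%:Z.
  have hs : ((p ^ m)%:Z %| s)%Z by apply: dvdz_mull; exact: dvdzz.
  have hs1 : ((p ^ 1)%:Z %| s)%Z by apply: dvdz_trans hs; apply: dvdpp.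
  exists (zpmod p m.+1 (r + s)); split; last first.
    rewrite zpmodS -{2}h1; apply: zp_eq.
    by rewrite addrAC subrr add0r.
  split; first exact: zpmod_mod.
  split; last first.
    rewrite -add1n zpmodS_k -h3; apply: zp_eq.
    by rewrite addrAC subrr add0r.
  have [K hK] := binom1 r s q.
  set z := zpmod p m.+1 (r + s).
  have e : z ^+ q.+1 - pval B m.+1 = (z ^+ q.+1 - (r + s) ^+ q.+1) + s ^+ 2 * K + (p ^ m)%:Z * (- k * (v * g - 1)).
    by apply: (lc2 1 (-1) hK ek); rewrite /s /g; ring.
  rewrite e; apply: rpredD; first apply: rpredD.
  - by apply: dvdXX; exact: zp_dvd.
  - apply: dvdz_mulr; rewrite /s exprMn; apply: dvdz_mull.
    by rewrite dvdzE abszX !absz_nat -expnM dvdn_exp2l //; rewrite /m; lia.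
  - rewrite expnS mulnC PoszM; apply: dvdz_mul; first exact: dvdzz.
    exact: dvdz_mull.
have [x hx] := build H1 Hl.
exists x; apply: padic_eq => -[|m]; first by rewrite !pval0.
have [_ [h _]] := hx m.
by rewrite pval_exp -(pval_red B) (zp_eq h).
Qed.

Local Notation K := (Qp p).
Local Notation P := (p%:R : R).

Definition Qe := (if p == 2%N then 2 else 1)%N.

Lemma Qe_ndvd : ~~ (p %| Qe.+1)%N.
Proof.
rewrite /Qe; case: eqP => [->|p2] //.
apply/negP => /(dvdn_leq (isT : (0 < 2)%N)) h.
have := p_gt1; have : p != 2%N by apply/eqP.
lia.
Qed.

Definition Int (z : K) := exists a b : R, pval b 1 != 0 /\ z = tofrac a / tofrac b.
Definition Pq (z : K) := exists y : K, y ^+ Qe.+1 = 1 + p%:R * z ^+ Qe.+1.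

Lemma unit_neq0 (b : R) : pval b 1 != 0 -> b != 0.
Proof. by apply: contra => /eqP ->; rewrite pval_zero. Qed.

Lemma tofrac_nat n : tofrac (n%:R : R) = n%:R :> K.
Proof. exact: rmorph_nat. Qed.

Lemma Int_Pq z : Int z -> Pq z.
Proof.
case=> a [b [hb ->]].
pose B := b ^+ Qe.+1 + P * a ^+ Qe.+1.
have hB : pval (B - b ^+ Qe.+1) 1 = 0.
  rewrite /B addrAC subrr add0r; apply: dv_mulr; exact: evP.1.
have [r hr] := hensel Qe_ndvd hb hB.
have b0 : tofrac b != 0 :> K by rewrite tofrac_eq0 unit_neq0.
exists (tofrac r / tofrac b).
rewrite exprMn exprVn -rmorphXn hr /B rmorphD rmorphM !rmorphXn rmorph_nat.
rewrite mulrDl divff ?expf_neq0 //.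
by rewrite -mulrA exprMn exprVn.
Qed.

Lemma evPX k : ev k (P ^+ k).
Proof. by have := evX k evP; rewrite mul1n. Qed.

Lemma Pq_Int z : Pq z -> Int z.
Proof.
case=> y hy.
have [a [b [b0 ez]]] := frac_decomp z.
have [c [d [d0 ey]]] := frac_decomp y.
set Q := Qe.+1 in hy.
have hQ : (2 <= Q)%N by rewrite /Q /Qe; case: eqP.
have fb : tofrac b != 0 :> K by rewrite tofrac_eq0.
have fd : tofrac d != 0 :> K by rewrite tofrac_eq0.
have eqR : c ^+ Q * b ^+ Q = d ^+ Q * (b ^+ Q + P * a ^+ Q).
  apply/eqP; rewrite -(tofrac_eq (R:=R)); apply/eqP.
  rewrite !tofracM !tofracXn tofracD tofracM !tofracXn tofrac_nat.
  rewrite ey ez in hy.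
  rewrite -[tofrac c](divfK fd) exprMn hy.
  have hA : tofrac a ^+ Q = (tofrac a / tofrac b) ^+ Q * tofrac b ^+ Q :> K.
    by rewrite -exprMn divfK.
  rewrite hA; ring.
have [a0|a0] := eqVneq a 0.
  exists 0, 1; split; first exact: ev0_one.2.
  by rewrite ez a0 !rmorph0 !mul0r.
have [al ha] := ev_ex a0.
have [be hb] := ev_ex b0.
case: (leqP be al) => hab.
  have [a' ea] := pdivide (dv_down hab ha.1).
  have [b' eb] := pdivide hb.1.
  have b'0 : b' != 0 by apply: contra b0 => /eqP b'0; rewrite eb b'0 mulr0.
  have [ga hg] := ev_ex b'0.
  have := evM (evPX be) hg; rewrite -eb => h.
  have gz : ga = 0%N by have := ev_uniq hb h; lia.
  rewrite gz in hg.
  exists a', b'; split; first exact: hg.2.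
  have Pn : tofrac (P ^+ be) != 0 :> K by rewrite tofrac_eq0; apply: ev_ne0 (evPX be).
  by rewrite ez ea eb !rmorphM invfM mulrACA divff // mul1r.
pose S := b ^+ Q + P * a ^+ Q.
have hPa : ev (1 + al * Q) (P * a ^+ Q) := evM evP (evX Q ha).
have hS : ev (1 + al * Q) S.
  rewrite /S addrC; apply: ev_add hPa _.
  apply: dv_down (evX Q hb).1; nia.
have c0 : c != 0.
  apply/eqP => c0; move: eqR; rewrite c0 expr0n /= mul0r => /esym /eqP.
  by rewrite mulf_eq0 expf_eq0 (negbTE d0) andbF /= (negbTE (ev_ne0 hS)).
have [ga hc] := ev_ex c0.
have [de hd] := ev_ex d0.
have h1 := evM (evX Q hc) (evX Q hb).
have h2 := evM (evX Q hd) hS.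
rewrite eqR in h1.
have e := ev_uniq h1 h2.
have : (((ga + be) * Q) %% Q = ((de + al) * Q + 1) %% Q)%N by congr (_ %% _)%N; lia.
by rewrite modnMl modnMDl modn_small.
Qed.

Lemma tofrac_int (k : int) : tofrac (k%:~R : R) = k%:~R :> K.
Proof. exact: rmorph_int. Qed.

Lemma K_char n : (n.+1%:R : K) != 0.
Proof.
rewrite -tofrac_nat tofrac_eq0; apply/eqP => h.
have := congr1 (fun x : R => pval x n.+1) h; rewrite pval_nat pval_zero zpE modz_small //.
apply/andP; split => //; rewrite ltz_nat; apply: ltn_expl; exact: p_gt1.
Qed.

Section Aut.
Variable f : K -> K.
Hypothesis fA : forall x y, f (x + y) = f x + f y.
Hypothesis fM : forall x y, f (x * y) = f x * f y.
Hypothesis f1 : f 1 = 1.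
Hypothesis fI : forall x y, f x = f y -> x = y.

Lemma fz : f 0 = 0.
Proof. by apply: (addrI (f 0)); rewrite -fA !addr0. Qed.

Lemma fN x : f (- x) = - f x.
Proof. by apply: (addrI (f x)); rewrite -fA !subrr fz. Qed.

Lemma fnat n : f n%:R = n%:R.
Proof. by elim: n => [|n IH]; [rewrite fz | rewrite -natr1 fA IH f1]. Qed.

Lemma fX x n : f (x ^+ n) = f x ^+ n.
Proof. by elim: n => [|n IH]; [rewrite !expr0 f1 | rewrite !exprS fM IH]. Qed.

Lemma fint (k : int) : f k%:~R = k%:~R.
Proof. by case: k => n; [rewrite -pmulrn fnat | rewrite NegzE mulrNz fN -pmulrn fnat]. Qed.

Lemma fV x : f x^-1 = (f x)^-1.
Proof.
have [->|x0] := eqVneq x 0; first by rewrite invr0 fz invr0.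
have fx0 : f x != 0 by apply: contra x0 => /eqP h; apply/eqP; apply: fI; rewrite h fz.
by apply: (mulfI fx0); rewrite -fM !divff.
Qed.

Lemma Int_f z : Int z -> Int (f z).
Proof.
case/Int_Pq => y hy; apply: Pq_Int; exists (f y).
by rewrite -fX hy fA f1 fM fX fnat.
Qed.

Lemma f_tofrac a : f (tofrac a) = tofrac a.
Proof.
have [e [g [hg he]]] : Int (f (tofrac a)).
  by apply: Int_f; exists a, 1; split; [exact: ev0_one.2 | rewrite tofrac1 divr1].
have g0 : tofrac g != 0 :> K by rewrite tofrac_eq0 unit_neq0.
suff ega : e = g * a by rewrite he ega tofracM mulrAC divff // mul1r.
apply/eqP; rewrite -subr_eq0; apply/eqP; apply: dv_all => n.
have [c hc] := int_approx a n.
have [c' [c'' [hc'' hfc]]] : Int (f (tofrac c)).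
  by apply: Int_f; exists c, 1; split; [exact: ev0_one.2 | rewrite tofrac1 divr1].
set an := pval a n in hc *.
have c''0 : tofrac c'' != 0 :> K by rewrite tofrac_eq0 unit_neq0.
have key : e * c'' = g * (an%:~R * c'' + P ^+ n * c').
  apply/eqP; rewrite -(tofrac_eq (R:=R)); apply/eqP.
  have heq : tofrac e = (an%:~R + p%:R ^+ n * (tofrac c' / tofrac c'')) * tofrac g :> K.
    rewrite -[tofrac e](divfK g0) -he hc tofracD tofracM tofracXn tofrac_int tofrac_nat fA fM fX fint fnat hfc.
    by [].
  rewrite !(tofracM, tofracD, tofracXn) tofrac_int tofrac_nat heq.
  exact: fld_aux.
have hPn : pval (P ^+ n) n = 0 by rewrite pval_Pk zpE modzz.
have h1 : pval ((e - g * an%:~R) * c'') n = 0.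
  have -> : (e - g * an%:~R) * c'' = P ^+ n * (g * c') by apply: (lc1 1 key); ring.
  exact: dv_mulr.
have h2 := dv_cancel h1 hc''.
have -> : e - g * a = (e - g * an%:~R) - g * (P ^+ n * c) by rewrite {1}hc; ring.
by apply: dv_sub h2 _; apply: dv_mull; apply: dv_mulr.
Qed.

Lemma f_id z : f z = z.
Proof.
have [a [b [b0 ->]]] := frac_decomp z.
by rewrite fM fV !f_tofrac.
Qed.
End Aut.

End P.

Section SDsec.
Variable F : fieldType.
Hypothesis h2 : 2%:R != 0 :> F.
Hypothesis h3 : 3%:R != 0 :> F.
Hypothesis h5 : 5%:R != 0 :> F.
Variable f : F -> F.
Hypothesis hf : SD_map f.

Lemma finj x y : x != y -> f x != f y.
Proof. by move=> /hf []. Qed.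
Lemma fSD x y : x != y -> f ((x+y)/(x-y)) = (f x + f y)/(f x - f y).
Proof. by move=> /hf []. Qed.

Lemma crossm (c u v : F) : v != 0 -> c = u / v -> c * v = u.
Proof. by move=> hv ->; rewrite mulfVK. Qed.

Lemma subn0F (x y : F) : x != y -> x - y != 0.
Proof. by rewrite subr_eq0. Qed.

Lemma finjE x y : f x = f y -> x = y.
Proof. by move=> e; case: (eqVneq x y) => // /finj; rewrite e eqxx. Qed.

Lemma one_neqm1 : (1 : F) != -1.
Proof.
apply/eqP => e; move: h2; rewrite -[2%:R]/(1 + 1 : F).
by rewrite {1}e addNr eqxx.
Qed.

Lemma f01 : f 0 = 0 /\ f 1 = 1.
Proof.
have n10 : (1 : F) != 0 by exact: oner_neq0.
have nm10 : (-1 : F) != 0 by rewrite oppr_eq0.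
have e1 : f 1 * (f 1 - f 0) = f 1 + f 0.
  apply: crossm; first exact/subn0F/finj.
  by rewrite -fSD // addr0 subr0 divff.
have e2 : f 1 * (f (-1) - f 0) = f (-1) + f 0.
  apply: crossm; first exact/subn0F/finj.
  by rewrite -fSD // addr0 subr0 divff.
have e3 : (f 1 - 1) * (f 1 - f (-1)) = 0 by apply: (lc2 1 (-1) e1 e2); ring.
move/eqP: e3; rewrite mulf_eq0 (negbTE (subn0F (finj one_neqm1))) orbF subr_eq0 => /eqP c1.
rewrite c1 in e1.
have e4 : 2%:R * f 0 = 0.
  have := e1; rewrite mul1r => /esym /eqP; rewrite -subr_eq0 => /eqP e.
  by rewrite -[RHS]e; ring.
move/eqP: e4; rewrite mulf_eq0 (negbTE h2) /= => /eqP a0.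
by [].
Qed.

Lemma f0 : f 0 = 0. Proof. by case: f01. Qed.
Lemma f1 : f 1 = 1. Proof. by case: f01. Qed.

Lemma fnz x : x != 0 -> f x != 0.
Proof. by move=> /finj; rewrite f0. Qed.

Lemma fm1 : f (-1) = -1.
Proof.
have : (0 : F) != 1 by rewrite eq_sym oner_neq0.
move=> /fSD.
by rewrite f0 f1 !add0r divrN divr1.
Qed.

Lemma fdiv x y : f (x / y) = f x / f y.
Proof.
have [->|y0] := eqVneq y 0; first by rewrite invr0 !mulr0 f0 invr0 mulr0.
have [->|xy] := eqVneq x y; first by rewrite !divff ?fnz // f1.
set t := x / y.
have t1 : t != 1.
  apply: contra xy => /eqP e; apply/eqP.
  by rewrite -[x](mulfVK y0) -/t e mul1r.
have E1 := fSD t1; have E2 := fSD xy.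
have e : (x + y) / (x - y) = (t + 1) / (t - 1).
  rewrite /t; field. by rewrite y0 mulN1r subn0F.
rewrite e E1 f1 in E2.
have ft1 : f t != 1 by rewrite -f1 finj.
move/eqP: E2; rewrite eqr_div ?subn0F ?finj // => /eqP E.
have fy0 := fnz y0.
have E' : (2%:R * f y) * (f t - f x / f y) = 0.
  have e0 : f x = f x / f y * f y by rewrite mulfVK.
  rewrite {}e0 in E; move: (f x / f y) E => z E.
  by apply: (lc1 (-1) E); ring.
move/eqP: E'; rewrite !mulf_eq0 (negbTE h2) (negbTE fy0) /= subr_eq0 => /eqP.
by [].
Qed.

Lemma finv x : f (x^-1) = (f x)^-1.
Proof. by have := fdiv 1 x; rewrite f1 !mul1r. Qed.

Lemma fmul x y : f (x * y) = f x * f y.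
Proof. by have := fdiv x (y^-1); rewrite invrK finv invrK. Qed.

Lemma fopp x : f (- x) = - f x.
Proof. by rewrite -mulN1r fmul fm1 mulN1r. Qed.

Lemma fstar x : f (x + 1) * (f x - 1) = f (x - 1) * (f x + 1).
Proof.
have [->|x1] := eqVneq x 1; first by rewrite f1 !subrr f0 mulr0 mul0r.
have := fSD x1; rewrite fdiv f1 => /eqP; rewrite eqr_div ?subn0F ?finj //.
- by move/eqP => ->; rewrite mulrC.
- by rewrite -f0 finj // subn0F.
- by rewrite -f1 finj.
Qed.


Lemma f2 : f 2%:R = 2%:R.
Proof.
have n1 : (2%:R : F) != 1.
  by rewrite -subr_eq0 (_ : 2%:R - 1 = 1) ?oner_neq0 //; ring.
have nm1 : (2%:R : F) != -1.
  by rewrite -subr_eq0 (_ : 2%:R - -1 = 3%:R) //; ring.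
set a := f 2%:R.
have a0 : a != 0 := fnz h2.
have a1 : a != 1 by rewrite -f1 finj.
have am1 : a != -1 by rewrite -fm1 finj.
have E2 := fstar 2%:R.
have E4 := fstar (2%:R * 2%:R).
have E5 := fstar (2%:R * 2%:R + 1).
rewrite (_ : 2%:R - 1 = 1) in E2; last by ring.
rewrite (_ : 2%:R * 2%:R - 1 = 2%:R + 1) in E4; last by ring.
rewrite (_ : 2%:R * 2%:R + 1 - 1 = 2%:R * 2%:R) in E5; last by ring.
rewrite (_ : 2%:R * 2%:R + 1 + 1 = 2%:R * (2%:R + 1)) in E5; last by ring.
rewrite !fmul -/a f1 in E2 E4 E5.
move: E2 E4 E5; set X := f (2%:R + 1); set Y := f (2%:R * 2%:R + 1) => E2 E4 E5.
have am10 : a - 1 != 0 by rewrite subn0F.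
have aa10 : a * a - 1 != 0.
  rewrite (_ : a * a - 1 = (a - 1) * (a + 1)); last by ring.
  by rewrite mulf_neq0 // -[1]opprK subn0F.
have eX : X = (a + 1) / (a - 1) by rewrite mul1r in E2; rewrite -E2 mulfK.
have eY : Y = X * (a * a + 1) / (a * a - 1) by rewrite -E4 mulfK.
have E5' : X * (Y - 1) = a * (Y + 1).
  by apply: (mulfI a0); rewrite mulrA E5 mulrA.
have key : (a - 2%:R) * (a * a + 1) * (-2%:R * a) = (a - 1) ^+ 3 * (X * (Y - 1) - a * (Y + 1)).
  rewrite eY eX; field; by rewrite am10 aa10.
rewrite E5' subrr mulr0 in key.
move/eqP: key; rewrite !mulf_eq0 oppr_eq0 (negbTE h2) (negbTE a0) /= orbF.
case/orP => [|/eqP e]; first by rewrite subr_eq0 => /eqP.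
have : f (2%:R * 2%:R) = f (-1) by rewrite fmul fm1 -/a; apply: (lc1 1 e); ring.
move/finjE/eqP; rewrite -subr_eq0 (_ : 2%:R * 2%:R - -1 = 5%:R) ?(negbTE h5) //; ring.
Qed.

Lemma fsq1 x : f (x * x + 1) = f x * f x + 1.
Proof.
have [->|x0] := eqVneq x 0; first by rewrite mulr0 add0r f1 f0 mulr0 add0r.
have [->|x1] := eqVneq x 1.
  by rewrite mulr1 f1 mulr1 (_ : 1 + 1 = 2%:R :> F) ?f2 //.
set u := f x; set P := f (x + 1); set Q := f (x - 1); set W := f (x * x + 1).
have u0 : u != 0 := fnz x0.
have Q0 : Q != 0 by apply: fnz; rewrite subn0F.
have ux : f (2%:R * x) = 2%:R * u by rewrite fmul f2.
have hx2 : 2%:R * x != 0 by rewrite mulf_neq0.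
have hu2 : 2%:R * u != 0 by rewrite mulf_neq0.
set X := (x * x + 1) / (2%:R * x).
have EX := fstar X.
have eXp : X + 1 = (x + 1) * (x + 1) / (2%:R * x) by rewrite /X; field; rewrite h2 x0.
have eXm : X - 1 = (x - 1) * (x - 1) / (2%:R * x) by rewrite /X; field; rewrite h2 x0.
rewrite eXp eXm /X !fdiv ux !fmul -/P -/Q -/W in EX.
have E : P * P * (W - 2%:R * u) = Q * Q * (W + 2%:R * u).
  transitivity ((2%:R * u) ^+ 2 * (P * P / (2%:R * u) * (W / (2%:R * u) - 1))).
    by field; rewrite h2 u0.
  by rewrite EX; field; rewrite h2 u0.
have E1 := fstar x; rewrite -/P -/Q -/u in E1.
have key : Q * Q * (2%:R * 2%:R * u) * (W - (u * u + 1)) = 0.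
  by apply: (lc2 ((u - 1) ^+ 2) (- (W - 2%:R * u) * (P * (u - 1) + Q * (u + 1))) E E1); ring.
move/eqP: key; rewrite !mulf_eq0 (negbTE h2) (negbTE u0) (negbTE Q0) /= subr_eq0.
by move/eqP.
Qed.

Lemma fsqp s : f (s * s + 1) = f (s * s) + 1.
Proof. by rewrite fsq1 fmul. Qed.

Lemma fsqm s : f (s * s - 1) = f (s * s) - 1.
Proof.
set w := s * s.
have E := fstar w; rewrite fsqp -/w in E.
have [e|ne] := eqVneq (f w + 1) 0.
  have fw : f w = f (-1) by rewrite fm1; apply: (lc1 1 e); ring.
  rewrite (finjE fw) fm1 (_ : (-1 - 1 : F) = - 2%:R); last by ring.
  by rewrite fopp f2; ring.
by apply: (mulIf ne); rewrite -E mulrC.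
Qed.

Lemma fsum2 s t : f (s * s + t * t) = f s * f s + f t * f t.
Proof.
have [->|t0] := eqVneq t 0; first by rewrite !mulr0 !addr0 f0 mulr0 addr0 fmul.
have ft0 := fnz t0.
rewrite (_ : s * s + t * t = (t * t) * ((s / t) * (s / t) + 1)); last by field.
by rewrite fmul fsq1 fdiv fmul; field.
Qed.

Lemma fdiff2 s t : f (s * s - t * t) = f s * f s - f t * f t.
Proof.
have [->|t0] := eqVneq t 0; first by rewrite !mulr0 !subr0 f0 mulr0 subr0 fmul.
have ft0 := fnz t0.
rewrite (_ : s * s - t * t = (t * t) * ((s / t) * (s / t) - 1)); last by field.
by rewrite fmul fsqm !fmul finv; field.
Qed.

Lemma fsign x : f (x + 1) = f x + 1 \/ f (x + 1) = - (f x + 1).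
Proof.
set u := f x; set P := f (x + 1); set Q := f (x - 1).
have e1 := fdiff2 (x + 1) (x - 1).
rewrite (_ : (x + 1) * (x + 1) - (x - 1) * (x - 1) = 2%:R * 2%:R * x) in e1; last by ring.
rewrite !fmul f2 -/u -/P -/Q in e1.
have e2 := fsum2 (x + 1) (x - 1).
rewrite (_ : (x + 1) * (x + 1) + (x - 1) * (x - 1) = 2%:R * (x * x + 1)) in e2; last by ring.
rewrite fmul fsq1 f2 -/u -/P -/Q in e2.
have key : 2%:R * ((P - (u + 1)) * (P + (u + 1))) = 0.
  by apply: (lc2 (-1) (-1) e1 e2); ring.
move/eqP: key; rewrite !mulf_eq0 (negbTE h2) /= subr_eq0 addr_eq0.
by case/orP => /eqP; [left|right].
Qed.

Lemma fadd1 x : f (x + 1) = f x + 1.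
Proof.
case: (fsign x) => // hP.
have [u0|u0] := eqVneq (f x) 0.
  have x0 : x = 0 by apply: finjE; rewrite f0.
  by rewrite x0 add0r f1 f0 add0r.
have [um|um] := eqVneq (f x + 1) 0; first by rewrite hP um oppr0.
have E := fstar (x + 1); rewrite addrK hP in E.
case: (fsign (x + 1)) => h'; rewrite h' hP in E.
  have key : 2%:R * f x * (f x + 1) = 0 by apply: (lc1 1 E); ring.
  by move/eqP: key; rewrite !mulf_eq0 (negbTE h2) (negbTE u0) (negbTE um).
have key : 2%:R * f x = 0 by apply: (lc1 (-1) E); ring.
by move/eqP: key; rewrite !mulf_eq0 (negbTE h2) (negbTE u0).
Qed.

Lemma fadd x y : f (x + y) = f x + f y.
Proof.
have [->|y0] := eqVneq y 0; first by rewrite !addr0 f0 addr0.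
have fy0 := fnz y0.
rewrite (_ : x + y = y * (x / y + 1)); last by field.
by rewrite fmul fadd1 fdiv; field.
Qed.

Lemma SD_ring : (forall x y, f (x + y) = f x + f y) /\ (forall x y, f (x * y) = f x * f y)
  /\ f 1 = 1 /\ (forall x y, f x = f y -> x = y).
Proof. by split; [exact: fadd | split; [exact: fmul | split; [exact: f1 | exact: finjE]]]. Qed.

End SDsec.

Theorem theoremA1 (p : nat) (hp : prime p) :
  forall f : Qp p -> Qp p, SD f <-> f = id.
Proof.
move=> f; split.
- case=> hsd _.
  have h2 : (2%:R : Qp p) != 0 := K_char hp 1.
  have h3 : (3%:R : Qp p) != 0 := K_char hp 2.
  have h5 : (5%:R : Qp p) != 0 := K_char hp 4.
  have [fA [fM [f1' fI]]] := SD_ring h2 h3 h5 hsd.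
  apply: boolp.funext => z.
  exact: (f_id hp fA fM f1' fI).
- move=> ->; split; last by move=> z; exists z.
  by move=> x y hxy; split.
Qed.
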